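(* Assume Hypothesis (LD). Let $[x]_\rho\subset M_1$ be a closed $\rho$-basic class. Then for every $\theta>0$ there exists $\delta>0$ such that every tuple $\xi=(\xi_0,\dots,\xi_n)$ with $\xi_0,\xi_n\in[x]_\rho$ and $A_n(\xi)\le\delta$ satisfies $\xi_i\in N^\theta([x]_\rho)$ for all $i=0,\dots,n$.
   Context: Setting. Let $M\subset\mathbb{R}^d$ be closed; all topological notions are relative to $M$. Let $F:M\to M$ be continuous with $\|F\|:=\sup_{x\in M}\|F(x)\|<\infty$. For $A\subset M$ and $\delta>0$, put $N^\delta(A)=\{x\in M:\inf_{y\in A}\|x-y\|<\delta\}$, and let $d(x,y)=\max_i|x_i-y_i|$. Let $\{X^\varepsilon\}_{\varepsilon>0}$ be a family of time-homogeneous Markov chains on $M$ with transition kernels $p^\varepsilon(x,\Gamma)$. Assume $M=M_0\cup M_1$ (disjoint), where $M_0$ is closed, $F(M_0)\subseteq M_0$, $F(M_1)\subseteq M_1$, and $p^\varepsilon(x,M_1)=0$ for all $\varepsilon>0$ and $x\in M_0$. $\rho$-chain recurrence. Given $\rho:M\times M\to[0,+\infty]$, for $\xi=(\xi_0,\dots,\xi_n)\in M^{n+1}$ set $A_n(\xi)=\sum_{i=0}^{n-1}\rho(\xi_i,\xi_{i+1})$. Set $B_\rho(x,y)=\inf\{A_n(\xi):n\ge1,\ \xi\in M^{n+1},\ \xi_0=x,\ \xi_n=y\}$. Write $x<_\rho y$ if $B_\rho(x,y)=0$, and $x\sim_\rho y$ if $x<_\rho y$ and $y<_\rho x$. Let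 $\mathcal{R}_\rho=\{x:x\sim_\rho x\}$. The $\rho$-basic classes are the equivalence classes $[x]_\rho$ of $\sim_\rho$ on $\mathcal{R}_\rho$. Hypothesis (LD). There is $\rho:M\times M\to[0,+\infty]$ such that: (i) $\rho$ is continuous on $M_1\times M$; (ii) $\rho(x,y)=0$ iff $y=F(x)$; (iii) for every $\beta>0$, $\inf\{\rho(x,y):x,y\in M,\ d(F(x),y)>\beta\}>0$; (iv) lower bound: for every compact $K\subset M_1$, every open ball $U$ of $M$ and every $\eta>0$, there is $\varepsilon_0>0$ such that $\varepsilon\log p^\varepsilon(x,U)\ge-\inf_{y\in U}\rho(x,y)-\eta$ for all $x\in K$ and $\varepsilon<\varepsilon_0$; (v) upper bound: for every closed $C\subset M$ and every $\eta>0$, there is $\varepsilon_0>0$ such that $\varepsilon\log p^\varepsilon(x,C)\le-\inf_{y\in C}\rho(x,y)+\eta$ for all $x\in M$ and $\varepsilon<\varepsilon_0$. *)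

(* Defs.v *)
From Stdlib Require Import Reals Lra.
Open Scope R_scope.

(** Points of R^d are represented by functions nat -> R whose coordinates
    of index >= d vanish (see [InRd]). *)
Definition pt := nat -> R.

Definition InRd (d : nat) (x : pt) : Prop := forall i, (d <= i)%nat -> x i = 0.

Fixpoint sumd (d : nat) (f : nat -> R) : R :=
  match d with O => 0 | S k => sumd k f + f k end.

Fixpoint maxd (d : nat) (f : nat -> R) : R :=
  match d with O => 0 | S k => Rmax (maxd k f) (f k) end.

Definition norm (d : nat) (x : pt) : R := sqrt (sumd d (fun i => x i ^ 2)).
Definition dist (d : nat) (x y : pt) : R := norm d (fun i => x i - y i).

Definition dmax (d : nat) (x y : pt) : R := maxd d (fun i => Rabs (x i - y i)).

Definition closed_Rd (d : nat) (M : pt -> Prop) : Prop :=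
  (forall x, M x -> InRd d x) /\
  (forall x, InRd d x ->
     (forall e, 0 < e -> exists y, M y /\ dist d x y < e) -> M x).

Definition closed_in (d : nat) (M A : pt -> Prop) : Prop :=
  (forall x, A x -> M x) /\
  (forall x, M x ->
     (forall e, 0 < e -> exists y, A y /\ dist d x y < e) -> A x).

Definition seq_compact (d : nat) (K : pt -> Prop) : Prop :=
  forall u : nat -> pt, (forall n, K (u n)) ->
  exists (phi : nat -> nat) (l : pt),
    (forall n, (phi n < phi (S n))%nat) /\ K l /\
    (forall e, 0 < e -> exists N, forall n, (N <= n)%nat -> dist d (u (phi n)) l < e).

Definition ball_in (d : nat) (M : pt -> Prop) (c : pt) (r : R) : pt -> Prop :=
  fun y => M y /\ dist d y c < r.

Definition Nbhd (d : nat) (M A : pt -> Prop) (delta : R) : pt -> Prop :=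
  fun x => M x /\ exists y, A y /\ dist d x y < delta.

Inductive ereal : Type := Fin (r : R) | PInf.

Definition eplus (a b : ereal) : ereal :=
  match a, b with Fin x, Fin y => Fin (x + y) | _, _ => PInf end.

Definition ele (a : ereal) (r : R) : Prop :=
  match a with Fin x => x <= r | PInf => False end.
Definition elt (a : ereal) (r : R) : Prop :=
  match a with Fin x => x < r | PInf => False end.
Definition ege (a : ereal) (r : R) : Prop :=
  match a with Fin x => r <= x | PInf => True end.

Fixpoint Acost (rho : pt -> pt -> ereal) (xi : nat -> pt) (n : nat) : ereal :=
  match n with
  | O => Fin 0
  | S k => eplus (Acost rho xi k) (rho (xi k) (xi (S k)))
  end.

(** x <_rho y : B_rho(x,y) = 0, i.e. (rho being nonnegative) for every
    delta > 0 there is a chain of length n >= 1 in M from x to y with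
    A_n < delta. *)
Definition rho_lt (M : pt -> Prop) (rho : pt -> pt -> ereal) (x y : pt) : Prop :=
  forall delta, 0 < delta ->
  exists (n : nat) (xi : nat -> pt),
    (1 <= n)%nat /\ xi O = x /\ xi n = y /\
    (forall i, (i <= n)%nat -> M (xi i)) /\ elt (Acost rho xi n) delta.

Definition rho_sim M rho x y : Prop := rho_lt M rho x y /\ rho_lt M rho y x.

Definition rho_rec M rho x : Prop := M x /\ rho_sim M rho x x.

Definition basic_class M rho (x : pt) : pt -> Prop :=
  fun y => rho_rec M rho y /\ rho_sim M rho x y.

Definition Setting (d : nat) (M M0 M1 : pt -> Prop) (F : pt -> pt)
    (p : R -> pt -> (pt -> Prop) -> R) : Prop :=
  closed_Rd d M /\
  (forall x, M x -> M (F x)) /\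
  (forall x, M x -> forall e, 0 < e -> exists del, 0 < del /\
      forall y, M y -> dist d x y < del -> dist d (F x) (F y) < e) /\
  (exists B, forall x, M x -> norm d (F x) <= B) /\
  (forall x, M x <-> (M0 x \/ M1 x)) /\
  (forall x, ~ (M0 x /\ M1 x)) /\
  closed_in d M M0 /\
  (forall x, M0 x -> M0 (F x)) /\
  (forall x, M1 x -> M1 (F x)) /\
  (forall eps x G, 0 < eps -> 0 <= p eps x G) /\
  (forall eps x, 0 < eps -> M0 x -> p eps x M1 = 0).

Definition LD (d : nat) (M M0 M1 : pt -> Prop) (F : pt -> pt)
    (p : R -> pt -> (pt -> Prop) -> R) (rho : pt -> pt -> ereal) : Prop :=
  (forall x y r, M x -> M y -> rho x y = Fin r -> 0 <= r) /\
  (* (i) rho continuous on M1 x M (for the topology of [0,+oo]) *)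
  (forall x y, M1 x -> M y ->
     match rho x y with
     | Fin r => forall e, 0 < e -> exists del, 0 < del /\
          forall x' y', M1 x' -> M y' -> dist d x x' < del -> dist d y y' < del ->
          exists r', rho x' y' = Fin r' /\ Rabs (r' - r) < e
     | PInf => forall K, exists del, 0 < del /\
          forall x' y', M1 x' -> M y' -> dist d x x' < del -> dist d y y' < del ->
          ege (rho x' y') K /\ rho x' y' <> Fin K
     end) /\
  (forall x y, M x -> M y -> (rho x y = Fin 0 <-> y = F x)) /\
  (forall beta, 0 < beta -> exists c, 0 < c /\
     forall x y, M x -> M y -> dmax d (F x) y > beta -> ege (rho x y) c) /\
  (* (iv) lower bound: eps log p(x,U) >= - inf_{y in U} rho(x,y) - eta,
     written out as: for each y in U with rho(x,y) = r finite,
     p(x,U) > 0 and eps log p(x,U) >= - r - eta *)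
  (forall K c r eta, seq_compact d K -> (forall x, K x -> M1 x) ->
     M c -> 0 < r -> 0 < eta ->
     exists eps0, 0 < eps0 /\
     forall x eps, K x -> 0 < eps < eps0 ->
     forall y rr, ball_in d M c r y -> rho x y = Fin rr ->
       0 < p eps x (ball_in d M c r) /\
       eps * ln (p eps x (ball_in d M c r)) >= - rr - eta) /\
  (* (v) upper bound: eps log p(x,C) <= - inf_{y in C} rho(x,y) + eta,
     written out as: either p(x,C) = 0 (log = -oo), or p(x,C) > 0 and
     inf_{y in C} rho(x,y) <= eta - eps log p(x,C) *)
  (forall C eta, closed_in d M C -> 0 < eta ->
     exists eps0, 0 < eps0 /\
     forall x eps, M x -> 0 < eps < eps0 ->
       p eps x C = 0 \/
       (0 < p eps x C /\
        forall s, s > eta - eps * ln (p eps x C) ->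
          exists y, C y /\ elt (rho x y) s)).

(* Main.v *)
Require Import Defs.
From Stdlib Require Import Reals.
From Stdlib Require Import Lra Lia Classical ClassicalEpsilon.
From Coquelicot Require Compactness.
Open Scope R_scope.

Lemma maxd_ge n f i : (i < n)%nat -> f i <= maxd n f.
Proof.
  induction n; intros H; [lia|]. simpl.
  destruct (Nat.eq_dec i n) as [->|Hne]; [apply Rmax_r|].
  eapply Rle_trans; [apply IHn; lia| apply Rmax_l].
Qed.

Lemma maxd_le n f e : 0 <= e -> (forall i, (i < n)%nat -> f i <= e) -> maxd n f <= e.
Proof.
  intros He; induction n; intros H; simpl; [lra|].
  apply Rmax_lub; [apply IHn; intros; apply H; lia| apply H; lia].
Qed.

Lemma maxd_lt n f e : 0 < e -> (forall i, (i < n)%nat -> f i < e) -> maxd n f < e.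
Proof.
  intros He; induction n; intros H; simpl; [lra|].
  apply Rmax_lub_lt; [apply IHn; intros; apply H; lia| apply H; lia].
Qed.

Lemma maxd_nonneg n f : 0 <= maxd n f.
Proof. induction n; simpl; [lra|]. eapply Rle_trans; [apply IHn| apply Rmax_l]. Qed.

Lemma dmax_nonneg d x y : 0 <= dmax d x y.
Proof. apply maxd_nonneg. Qed.

Lemma dmax_sym d x y : dmax d x y = dmax d y x.
Proof.
  unfold dmax; induction d; simpl; auto. rewrite IHd, Rabs_minus_sym; auto.
Qed.

Lemma dmax_coord d x y i : (i < d)%nat -> Rabs (x i - y i) <= dmax d x y.
Proof. intros; apply (maxd_ge d (fun i => Rabs (x i - y i))); auto. Qed.

Lemma dmax_tri d x y z : dmax d x z <= dmax d x y + dmax d y z.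
Proof.
  apply maxd_le. pose proof (dmax_nonneg d x y); pose proof (dmax_nonneg d y z); lra.
  intros i Hi. replace (x i - z i) with ((x i - y i) + (y i - z i)) by ring.
  eapply Rle_trans; [apply Rabs_triang|].
  pose proof (dmax_coord d x y i Hi); pose proof (dmax_coord d y z i Hi); lra.
Qed.

Lemma dmax_refl d x : dmax d x x = 0.
Proof.
  apply Rle_antisym; [|apply dmax_nonneg]. apply maxd_le; [lra|].
  intros; rewrite Rminus_diag, Rabs_R0; lra.
Qed.

Lemma dmax_lt d x y e : 0 < e -> (forall i, (i < d)%nat -> Rabs (x i - y i) < e) -> dmax d x y < e.
Proof. intros; apply maxd_lt; auto. Qed.

Lemma sumd_nonneg n f : (forall j, 0 <= f j) -> 0 <= sumd n f.
Proof. intros H; induction n; simpl; [lra|]. specialize (H n); lra. Qed.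

Lemma sumd_ge n f i : (forall j, 0 <= f j) -> (i < n)%nat -> f i <= sumd n f.
Proof.
  intros H; induction n; intros Hi; [lia|]. simpl.
  destruct (Nat.eq_dec i n) as [->|Hne].
  - pose proof (sumd_nonneg n f H); lra.
  - pose proof (IHn ltac:(lia)); specialize (H n); lra.
Qed.

Lemma sumd_le n f c : (forall j, (j < n)%nat -> f j <= c) -> sumd n f <= INR n * c.
Proof.
  induction n; intros H; [simpl; lra|].
  change (sumd (S n) f) with (sumd n f + f n). rewrite S_INR. pose proof (IHn ltac:(intros; apply H; lia)). specialize (H n ltac:(lia)). lra.
Qed.

Lemma coord_le_sqrt d v i : (i < d)%nat -> Rabs (v i) <= sqrt (sumd d (fun j => v j ^ 2)).
Proof.
  intros Hi. rewrite <- sqrt_Rsqr_abs. apply sqrt_le_1_alt.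
  rewrite Rsqr_pow2. apply (sumd_ge d (fun j => v j ^ 2)); auto.
  intros; apply pow2_ge_0.
Qed.

Lemma dmax_le_dist d x y : dmax d x y <= Defs.dist d x y.
Proof.
  apply maxd_le. unfold Defs.dist, norm; apply sqrt_pos.
  intros i Hi. unfold Defs.dist, norm. apply (coord_le_sqrt d (fun i => x i - y i)); auto.
Qed.

Definition kap (d : nat) := INR d + 1.
Lemma kap_pos d : 0 < kap d.
Proof. unfold kap; pose proof (pos_INR d); lra. Qed.
Lemma kap_ge1 d : 1 <= kap d.
Proof. unfold kap; pose proof (pos_INR d); lra. Qed.

Lemma dist_le_dmax d x y : Defs.dist d x y <= kap d * dmax d x y.
Proof.
  unfold Defs.dist, norm. set (m := dmax d x y).
  assert (Hm : 0 <= m) by apply dmax_nonneg.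
  assert (Hs : sumd d (fun i => (x i - y i) ^ 2) <= INR d * (m * m)).
  { apply sumd_le. intros j Hj. pose proof (dmax_coord d x y j Hj) as Hc. fold m in Hc.
    rewrite <- (pow2_abs (x j - y j)). pose proof (Rabs_pos (x j - y j)).
    simpl. rewrite Rmult_1_r. apply Rmult_le_compat; lra. }
  assert (0 <= kap d * m) by (pose proof (kap_pos d); apply Rmult_le_pos; lra).
  rewrite <- (sqrt_square (kap d * m)) by auto.
  apply sqrt_le_1_alt. pose proof (pos_INR d). unfold kap in *.
  assert (INR d * (m*m) <= (INR d + 1) * m * ((INR d + 1) * m)) by nra. lra.
Qed.

Lemma dist_refl d x : Defs.dist d x x = 0.
Proof.
  apply Rle_antisym. pose proof (dist_le_dmax d x x). rewrite dmax_refl in H. lra.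
  unfold Defs.dist, norm; apply sqrt_pos.
Qed.

Fixpoint tn_of (n k : nat) (x : pt) : Compactness.Tn n R :=
  match n with O => tt | S n' => (x k, tn_of n' (S k) x) end.
Fixpoint pt_of (n k : nat) : Compactness.Tn n R -> pt :=
  match n return Compactness.Tn n R -> pt with
  | O => fun _ _ => 0
  | S n' => fun t i => if Nat.eqb i k then fst t else pt_of n' (S k) (snd t) i end.

Lemma pt_of_out n : forall k t i, (i < k \/ k + n <= i)%nat -> pt_of n k t i = 0.
Proof.
  induction n; intros k t i H; simpl; auto.
  destruct (Nat.eqb_spec i k); [lia|]. apply IHn; lia.
Qed.

Lemma bounded_tn n : forall k x r, (forall i, (k <= i < k + n)%nat -> Rabs (x i) <= r) ->
  Compactness.bounded_n n (tn_of n k (fun _ => - r)) (tn_of n k (fun _ => r)) (tn_of n k x).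
Proof.
  induction n; intros k x r H; simpl; auto. split.
  - specialize (H k ltac:(lia)). pose proof (Rle_abs (x k)); pose proof (Rle_abs (- x k)); rewrite Rabs_Ropp in *. lra.
  - apply IHn. intros; apply H; lia.
Qed.

Lemma close_tn n : forall k e x t, Compactness.close_n n e (tn_of n k x) t ->
  forall i, (k <= i < k + n)%nat -> Rabs (x i - pt_of n k t i) < e.
Proof.
  induction n; intros k e x t H i Hi; [lia|]. destruct t as [t1 t2]. simpl in H |- *.
  destruct H as [H1 H2]. destruct (Nat.eqb_spec i k); [subst; auto|].
  apply IHn; auto; lia.
Qed.

Lemma InRd_pt_of d T : InRd d (pt_of d 0 T).
Proof. intros i Hi. apply pt_of_out. lia. Qed.

Lemma GL (d : nat) (S : pt -> Prop) (r : R) (g : pt -> R) :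
  (forall s, S s -> InRd d s /\ forall i, (i < d)%nat -> Rabs (s i) <= r) ->
  (forall t, InRd d t -> (forall e, 0 < e -> exists s, S s /\ Defs.dist d t s < e) -> S t) ->
  (forall t, S t -> 0 < g t) ->
  exists dd, 0 < dd /\ forall s, S s -> exists t, S t /\ dmax d s t < g t /\ dd <= g t.
Proof.
  intros HS Hcl Hg.
  assert (exG : forall t, InRd d t -> exists e, 0 < e /\ (S t -> e <= g t) /\
     (~ S t -> forall s, S s -> e <= dmax d t s)).
  { intros t Ht. destruct (classic (S t)) as [H|H].
    - exists (g t). split; [auto|]. split; [lra| tauto].
    - assert (exists e, 0 < e /\ forall s, S s -> e <= Defs.dist d t s) as [e [He Hs]].
      { apply NNPP; intro Hn. apply H, Hcl; auto. intros e He.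
        apply NNPP; intro Hn2. apply Hn. exists e; split; auto.
        intros s Hs. apply Rnot_lt_le. intro Hlt. apply Hn2. exists s; auto. }
      exists (e / kap d). pose proof (kap_pos d). split; [apply Rdiv_lt_0_compat; auto|].
      split; [tauto|]. intros _ s Hs'. specialize (Hs s Hs').
      pose proof (dist_le_dmax d t s).
      apply (Rmult_le_reg_l (kap d)); auto. unfold Rdiv.
      rewrite <- Rmult_assoc, (Rmult_comm (kap d) e), Rmult_assoc, Rinv_r by lra. lra. }
  set (G := fun T : Compactness.Tn d R =>
     proj1_sig (constructive_indefinite_description _ (exG (pt_of d 0 T) (InRd_pt_of d T)))).
  assert (HG : forall T, 0 < G T /\ (S (pt_of d 0 T) -> G T <= g (pt_of d 0 T)) /\
     (~ S (pt_of d 0 T) -> forall s, S s -> G T <= dmax d (pt_of d 0 T) s)).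
  { intros T. unfold G. destruct (constructive_indefinite_description _ _) as [e He]. exact He. }
  set (delta := fun T => RIneq.mkposreal (G T) (proj1 (HG T))).
  destruct (Compactness.compactness_value d (tn_of d 0 (fun _ => - r)) (tn_of d 0 (fun _ => r)) delta)
    as [dd Hdd].
  exists (RIneq.pos dd). split; [apply RIneq.cond_pos|].
  intros s Hs. destruct (HS s Hs) as [HsR Hsb].
  assert (Hb := bounded_tn d 0 s r ltac:(intros; apply Hsb; lia)).
  specialize (Hdd _ Hb). apply NNPP; intro Hno. apply Hdd. intros [T [_ [Hc Hle]]].
  apply Hno. set (t := pt_of d 0 T).
  simpl in Hle. destruct (HG T) as [HGp [HG1 HG2]].
  assert (Hdm : dmax d s t < G T).
  { apply dmax_lt; auto. intros i Hi. apply (close_tn d 0 (G T) s T Hc). lia. }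
  destruct (classic (S t)) as [HSt|HSt].
  - exists t. split; auto. specialize (HG1 HSt). fold t in HG1. simpl in Hle. unfold G in *. split; lra.
  - exfalso. specialize (HG2 HSt s Hs). rewrite dmax_sym in HG2. fold t in HG2. lra.
Qed.

Lemma eplus_assoc a b c : eplus a (eplus b c) = eplus (eplus a b) c.
Proof. destruct a, b, c; simpl; auto. rewrite Rplus_assoc; auto. Qed.

Lemma Acost_ext rho a b n : (forall j, (j <= n)%nat -> a j = b j) -> Acost rho a n = Acost rho b n.
Proof.
  induction n; intros H; simpl; auto. rewrite IHn by (intros; apply H; lia).
  rewrite (H n), (H (S n)) by lia. auto.
Qed.

Lemma Acost_split rho a m k :
  Acost rho a (m + k)%nat = eplus (Acost rho a m) (Acost rho (fun j => a (m + j)%nat) k).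
Proof.
  induction k.
  - rewrite Nat.add_0_r. simpl. destruct (Acost rho a m); simpl; auto. rewrite Rplus_0_r; auto.
  - rewrite Nat.add_succ_r. simpl. rewrite IHk, <- eplus_assoc. rewrite Nat.add_succ_r. auto.
Qed.

Definition app (m : nat) (a b : nat -> pt) (j : nat) : pt :=
  if Nat.leb j m then a j else b (j - m)%nat.
Definition jmp (u v : pt) (j : nat) : pt := if Nat.eqb j 0 then u else v.

Definition chain (M : pt -> Prop) rho (u v : pt) (n : nat) (xi : nat -> pt) (c : ereal) :=
  xi O = u /\ xi n = v /\ (forall i, (i <= n)%nat -> M (xi i)) /\ Acost rho xi n = c.

Lemma chain_app M rho u v w m k a b c1 c2 :
  chain M rho u v m a c1 -> chain M rho v w k b c2 ->
  chain M rho u w (m + k)%nat (app m a b) (eplus c1 c2).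
Proof.
  intros [Ha0 [Ham [HaM Hac]]] [Hb0 [Hbk [HbM Hbc]]]. unfold app. split; [|split; [|split]].
  - simpl. auto.
  - destruct k.
    + rewrite Nat.add_0_r, Nat.leb_refl. congruence.
    + replace (Nat.leb (m + S k)%nat m) with false by (symmetry; apply Nat.leb_gt; lia).
      replace (m + S k - m)%nat with (S k) by lia. auto.
  - intros i Hi. destruct (Nat.leb_spec i m); [apply HaM; lia| apply HbM; lia].
  - rewrite Acost_split. rewrite <- Hac, <- Hbc. f_equal.
    + apply Acost_ext. intros j Hj. apply Nat.leb_le in Hj. rewrite Hj. auto.
    + apply Acost_ext. intros j Hj. destruct (Nat.leb_spec (m + j)%nat m).
      * assert (j = 0)%nat by lia. subst. rewrite Nat.add_0_r. congruence.
      * f_equal. lia.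
Qed.

Lemma chain_jmp M rho u v : M u -> M v -> chain M rho u v 1 (jmp u v) (eplus (Fin 0) (rho u v)).
Proof.
  intros Hu Hv. unfold chain, jmp. simpl. split; [auto|split;[auto|split;[|auto]]].
  intros i Hi. destruct (Nat.eqb_spec i 0); auto.
Qed.

Lemma chain_self M rho xi n : (forall i, (i <= n)%nat -> M (xi i)) ->
  chain M rho (xi O) (xi n) n xi (Acost rho xi n).
Proof. intros; repeat split; auto. Qed.

Lemma chain_shift M rho xi m n : (m <= n)%nat -> (forall i, (i <= n)%nat -> M (xi i)) ->
  chain M rho (xi m) (xi n) (n - m) (fun j => xi (m + j)%nat) (Acost rho (fun j => xi (m + j)%nat) (n - m)).
Proof.
  intros Hmn H. repeat split.
  - rewrite Nat.add_0_r; auto.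
  - f_equal; lia.
  - intros i Hi; apply H; lia.
Qed.

Lemma elt_plus a b s1 s2 : elt a s1 -> elt b s2 -> elt (eplus a b) (s1 + s2).
Proof. destruct a, b; simpl; try tauto. lra. Qed.
Lemma ele_elt_plus a b s1 s2 : ele a s1 -> elt b s2 -> elt (eplus a b) (s1 + s2).
Proof. destruct a, b; simpl; try tauto. lra. Qed.
Lemma elt_ele_plus a b s1 s2 : elt a s1 -> ele b s2 -> elt (eplus a b) (s1 + s2).
Proof. destruct a, b; simpl; try tauto. lra. Qed.
Lemma elt_fin0 b s : elt b s -> elt (eplus (Fin 0) b) s.
Proof. destruct b; simpl; auto. lra. Qed.

Lemma ele_split a b s : ege a 0 -> ege b 0 -> ele (eplus a b) s -> ele a s /\ ele b s.
Proof. destruct a, b; simpl; try tauto. lra. Qed.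

Lemma ege_plus a b : ege a 0 -> ege b 0 -> ege (eplus a b) 0.
Proof. destruct a, b; simpl; auto. lra. Qed.


Lemma rho_ege (M : pt -> Prop) (rho : pt -> pt -> ereal) (Hnn : forall x y r, M x -> M y -> rho x y = Fin r -> 0 <= r) x y : M x -> M y -> ege (rho x y) 0.
Proof. intros Hx Hy. destruct (rho x y) eqn:E; simpl; auto. eapply Hnn; [exact Hx|exact Hy|exact E]. Qed.

Lemma Acost_ege (M : pt -> Prop) (rho : pt -> pt -> ereal) (Hnn : forall x y r, M x -> M y -> rho x y = Fin r -> 0 <= r) xi n : (forall i, (i <= n)%nat -> M (xi i)) -> ege (Acost rho xi n) 0.
Proof.
  induction n; intros H; simpl; [lra|]. apply ege_plus.
  apply IHn; intros; apply H; lia. apply (rho_ege M rho Hnn); apply H; lia.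
Qed.

Lemma prefix_suffix (M : pt -> Prop) (rho : pt -> pt -> ereal) (Hnn : forall x y r, M x -> M y -> rho x y = Fin r -> 0 <= r) xi n m s : (m <= n)%nat -> (forall i, (i <= n)%nat -> M (xi i)) ->
  ele (Acost rho xi n) s ->
  ele (Acost rho xi m) s /\ ele (Acost rho (fun j => xi (m + j)%nat) (n - m)) s.
Proof.
  intros Hmn H Hc. replace n with (m + (n - m))%nat in Hc by lia.
  rewrite Acost_split in Hc. apply ele_split in Hc; auto.
  apply (Acost_ege M rho Hnn); intros; apply H; lia.
  apply (Acost_ege M rho Hnn); intros; apply H; lia.
Qed.

Lemma step_le (M : pt -> Prop) (rho : pt -> pt -> ereal) (Hnn : forall x y r, M x -> M y -> rho x y = Fin r -> 0 <= r) xi n j s : (j < n)%nat -> (forall i, (i <= n)%nat -> M (xi i)) ->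
  ele (Acost rho xi n) s -> ele (rho (xi j) (xi (S j))) s.
Proof.
  intros Hj H Hc. destruct (prefix_suffix M rho Hnn xi n j s ltac:(lia) H Hc) as [_ Hs].
  destruct (prefix_suffix M rho Hnn (fun k => xi (j + k)%nat) (n - j) 1 s ltac:(lia)
    ltac:(intros; apply H; lia) Hs) as [H1 _].
  simpl in H1. rewrite Nat.add_0_r, Nat.add_1_r in H1.
  destruct (rho (xi j) (xi (S j))); simpl in *; lra.
Qed.


Lemma elt_mono a s s' : elt a s -> s <= s' -> elt a s'.
Proof. destruct a; simpl; lra. Qed.
Lemma elt_ele a s : elt a s -> ele a s.
Proof. destruct a; simpl; lra. Qed.

Lemma choose_fun (P : pt -> R -> Prop) : (forall t, exists e, P t e) -> exists g, forall t, P t (g t).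
Proof.
  intros H. exists (fun t => proj1_sig (constructive_indefinite_description _ (H t))).
  intros t. destruct (constructive_indefinite_description _ _); auto.
Qed.

Lemma rho_lt_of_chain M rho u v n xi c s : chain M rho u v n xi c -> (1 <= n)%nat -> elt c s ->
  exists (n : nat) (xi : nat -> pt),
    (1 <= n)%nat /\ xi O = u /\ xi n = v /\
    (forall i, (i <= n)%nat -> M (xi i)) /\ elt (Acost rho xi n) s.
Proof.
  intros [H0 [Hn [HM Hc]]] Hn1 Hs. exists n, xi. repeat split; auto. rewrite Hc; auto.
Qed.

Lemma chain_of_rho_lt M rho u v s : rho_lt M rho u v -> 0 < s ->
  exists n xi c, chain M rho u v n xi c /\ (1 <= n)%nat /\ elt c s.
Proof.
  intros H Hs. destruct (H s Hs) as [n [xi [Hn [H0 [H1 [HM Hc]]]]]].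
  exists n, xi, (Acost rho xi n). repeat split; auto.
Qed.

Lemma rho_lt_trans M rho u v w : rho_lt M rho u v -> rho_lt M rho v w -> rho_lt M rho u w.
Proof.
  intros H1 H2 s Hs.
  destruct (chain_of_rho_lt _ _ _ _ (s/2) H1 ltac:(lra)) as [n1 [a [c1 [Ha [Hn1 Hc1]]]]].
  destruct (chain_of_rho_lt _ _ _ _ (s/2) H2 ltac:(lra)) as [n2 [b [c2 [Hb [Hn2 Hc2]]]]].
  eapply rho_lt_of_chain. apply (chain_app _ _ _ _ _ _ _ _ _ _ _ Ha Hb). lia.
  replace s with (s/2 + s/2) by lra. apply elt_plus; auto.
Qed.

Lemma in_class M rho x y : M y -> rho_lt M rho x y -> rho_lt M rho y x -> basic_class M rho x y.
Proof.
  intros HM H1 H2. split; [split; [auto| split; eapply rho_lt_trans; eauto]| split; auto].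
Qed.

Lemma dist_lt_of_dmax d a b e : 0 < e -> dmax d a b < e / kap d -> Defs.dist d a b < e.
Proof.
  intros He H. pose proof (dist_le_dmax d a b). pose proof (kap_pos d).
  assert (kap d * dmax d a b < e).
  { apply (Rmult_lt_compat_l (kap d)) in H; auto. unfold Rdiv in H.
    rewrite <- Rmult_assoc, (Rmult_comm (kap d) e), Rmult_assoc, Rinv_r, Rmult_1_r in H by lra. auto. }
  lra.
Qed.

Lemma dmax_lt_of_dist d a b e : Defs.dist d a b < e -> dmax d a b < e.
Proof. intros; pose proof (dmax_le_dist d a b); lra. Qed.

Lemma sep d M A t : closed_in d M A -> M t -> ~ A t ->
  exists e, 0 < e /\ forall a, A a -> e <= dmax d t a.
Proof.
  intros [_ Hcl] Ht Hn.
  assert (exists e, 0 < e /\ forall a, A a -> e <= Defs.dist d t a) as [e [He Ha]].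
  { apply NNPP; intro H. apply Hn, Hcl; auto. intros e He.
    apply NNPP; intro H2. apply H. exists e; split; auto.
    intros a Ha. apply Rnot_lt_le. intro Hlt. apply H2. exists a; auto. }
  exists (e / kap d). pose proof (kap_pos d). split; [apply Rdiv_lt_0_compat; auto|].
  intros a Ha'. apply Rnot_lt_le. intro Hlt. apply dist_lt_of_dmax in Hlt; auto.
  specialize (Ha a Ha'). lra.
Qed.

Lemma dich (P : nat -> Prop) n : P O ->
  (forall j, (j <= n)%nat -> P j) \/ exists i, (1 <= i <= n)%nat /\ P (i - 1)%nat /\ ~ P i.
Proof.
  intros H0. induction n.
  - left; intros j Hj; replace j with O by lia; auto.
  - destruct IHn as [H|H].
    + destruct (classic (P (S n))) as [Hs|Hs].
      * left; intros j Hj. destruct (Nat.eq_dec j (S n)); [subst; auto| apply H; lia].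
      * right; exists (S n). split; [lia|]. replace (S n - 1)%nat with n by lia. split; auto.
    + right. destruct H as [i [Hi H]]. exists i; split; [lia|auto].
Qed.

Theorem mainTheorem11 (d : nat) (M M0 M1 : pt -> Prop) (F : pt -> pt)
    (p : R -> pt -> (pt -> Prop) -> R) (rho : pt -> pt -> ereal) (x : pt) :
  Setting d M M0 M1 F p ->
  LD d M M0 M1 F p rho ->
  rho_rec M rho x ->
  closed_in d M (basic_class M rho x) ->
  (forall y, basic_class M rho x y -> M1 y) ->
  forall theta, 0 < theta ->
  exists delta, 0 < delta /\
    forall (n : nat) (xi : nat -> pt),
      (forall i, (i <= n)%nat -> M (xi i)) ->
      basic_class M rho x (xi O) ->
      basic_class M rho x (xi n) ->
      ele (Acost rho xi n) delta ->
      forall i, (i <= n)%nat -> Nbhd d M (basic_class M rho x) theta (xi i).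
Proof.
  intros HSet HLD Hx HCcl HC1 theta Hth.
  destruct HSet as [HMcl [HMF [HFc [[B HB] [HMU [Hdisj [HM0cl [HF0 [HF1 _]]]]]]]]].
  destruct HLD as [Hnn [Hcont [Hzero [Hiii _]]]].
  set (C := basic_class M rho x) in *.
  assert (HCx : C x) by (split; [auto| destruct Hx; auto]).
  assert (HCM : forall y, C y -> M y) by (intros y [[Hy _] _]; auto).
  assert (HCin : forall y, M y -> rho_lt M rho x y -> rho_lt M rho y x -> C y)
    by (intros; apply in_class; auto).
  assert (HM1M : forall y, M1 y -> M y) by (intros; apply HMU; auto).
  assert (HMM1 : forall y, M y -> ~ M0 y -> M1 y)
    by (intros y Hy Hn; destruct (proj1 (HMU y) Hy); tauto).
  assert (Hbeta : forall beta, 0 < beta -> exists c, 0 < c /\ forall a b s, M a -> M b ->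
      ele (rho a b) s -> s < c -> dmax d (F a) b <= beta).
  { intros beta Hb. destruct (Hiii beta Hb) as [c [Hc H]]. exists c; split; auto.
    intros a b s Ha Hb' Hs Hsc. apply Rnot_lt_le; intro Hlt.
    specialize (H a b Ha Hb' ltac:(lra)). destruct (rho a b); simpl in *; lra. }
  assert (HFb : forall a i, M a -> (i < d)%nat -> Rabs (F a i) <= B).
  { intros a i Ha Hi. eapply Rle_trans; [apply (coord_le_sqrt d (F a) i Hi)|]. apply HB; auto. }
  assert (HCb : forall y i, C y -> (i < d)%nat -> Rabs (y i) <= B + 1).
  { destruct (Hbeta 1 ltac:(lra)) as [c1 [Hc1 Hc1']].
    intros y i [[HMy _] [Hxy _]] Hi.
    destruct (chain_of_rho_lt _ _ _ _ (c1/2) Hxy ltac:(lra)) as [n [a [c [[Ha0 [Han [HaM Hac]]] [Hn Hc]]]]].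
    assert (Hst := step_le M rho Hnn a n (n - 1) (c1/2) ltac:(lia) HaM
      ltac:(rewrite Hac; apply elt_ele; auto)).
    replace (S (n - 1)) with n in Hst by lia. rewrite Han in Hst.
    assert (Hd := Hc1' _ _ _ (HaM (n-1)%nat ltac:(lia)) HMy Hst ltac:(lra)).
    pose proof (dmax_coord d (F (a (n-1)%nat)) y i Hi).
    pose proof (HFb (a (n-1)%nat) i (HaM (n-1)%nat ltac:(lia)) Hi).
    replace (y i) with (F (a (n-1)%nat) i - (F (a (n-1)%nat) i - y i)) by ring.
    eapply Rle_trans; [apply Rabs_triang|]. rewrite Rabs_Ropp. lra. }
  assert (HA : exists r0, 0 < r0 /\ forall c m, C c -> M0 m -> r0 <= dmax d c m).
  { assert (Hg : exists g, forall t, C t -> 0 < g t /\ forall m, M0 m -> 2 * g t <= dmax d t m).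
    { apply (choose_fun (fun t e => C t -> 0 < e /\ forall m, M0 m -> 2*e <= dmax d t m)).
      intros t. destruct (classic (C t)) as [Ht|Ht]; [|exists 0; tauto].
      destruct (sep d M M0 t HM0cl (HCM t Ht)) as [e [He He']].
      { intro H0. apply (Hdisj t); split; auto. }
      exists (e/2). intros _. split; [lra|]. intros m Hm; specialize (He' m Hm); lra. }
    destruct Hg as [g Hg].
    destruct (GL d C (B+1) g) as [dd [Hdd Hdd']].
    - intros s Hs. split; [apply (proj1 HMcl); auto| intros; apply HCb; auto].
    - intros t Ht Happ. apply (proj2 HCcl); auto. apply (proj2 HMcl); auto.
      intros e He; destruct (Happ e He) as [s [Hs Hd]]; exists s; split; auto.
    - intros t Ht; apply Hg; auto.
    - exists dd; split; auto. intros c m Hc Hm. destruct (Hdd' c Hc) as [t [Ht [Hct Hdt]]].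
      apply Rnot_lt_le; intro Hlt. destruct (Hg t Ht) as [_ Hgt]. specialize (Hgt m Hm).
      pose proof (dmax_tri d t c m) as Htri. rewrite (dmax_sym d t c) in Htri. lra. }
  destruct HA as [r0 [Hr0 HA]].
  set (th2 := Rmin (theta / kap d) (r0 / 4)).
  assert (Hth2 : 0 < th2) by (unfold th2; apply Rmin_glb_lt; [apply Rdiv_lt_0_compat; [lra| apply kap_pos] | lra]).
  assert (Hth2a : th2 <= theta / kap d) by apply Rmin_l.
  assert (Hth2b : th2 <= r0 / 4) by apply Rmin_r.
  set (Sset := fun w => M w /\ forall e, 0 < e -> exists c, C c /\ dmax d w c < th2 + e).
  assert (HSM1 : forall w, Sset w -> M1 w).
  { intros w [Hw Hwe]. apply HMM1; auto. intro H0. destruct (Hwe th2 Hth2) as [c [Hc Hdc]].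
    specialize (HA c w Hc H0). rewrite dmax_sym in Hdc. lra. }
  set (Good := fun t e => forall w z y, Sset w -> M z -> M y -> dmax d w t < e ->
     dmax d (F w) z < e/2 -> dmax d (F w) z < th2/4 -> dmax d (F z) y < e/2 ->
     (forall c, C c -> th2 <= dmax d z c) ->
     (exists n a c, chain M rho x w n a c /\ elt c (2*e/3)) ->
     (exists n a c, chain M rho y x n a c /\ elt c (2*e/3)) -> False).
  assert (Hgood : exists g, forall t, Sset t -> 0 < g t /\ Good t (g t)).
  { apply (choose_fun (fun t e => Sset t -> 0 < e /\ Good t e)). intros t.
    destruct (classic (Sset t)) as [Ht|Ht]; [|exists 0; tauto].
    assert (Hkd : forall a, 0 < a -> 0 < a / kap d)
      by (intros; apply Rdiv_lt_0_compat; [auto| apply kap_pos]).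
    assert (HM1t := HSM1 t Ht). assert (HMt := proj1 Ht).
    assert (HMFt := HMF t HMt). assert (HM1Ft := HF1 t HM1t).
    destruct (classic (exists c, C c /\ dmax d (F t) c < th2/2)) as [[c [Hc Hdc]] | Hnc].
    - destruct (HFc t HMt (th2/4) ltac:(lra)) as [eta [Heta Heta']].
      exists (eta / kap d). intros _. split; [apply Hkd; auto|].
      intros w z y HSw HMz HMy Hwt Hwz1 Hwz2 Hzy Hfar _ _.
      assert (Hdtw : Defs.dist d t w < eta) by (apply dist_lt_of_dmax; auto; rewrite dmax_sym; auto).
      specialize (Heta' w (proj1 HSw) Hdtw). apply dmax_lt_of_dist in Heta'.
      specialize (Hfar c Hc).
      pose proof (dmax_tri d z (F w) c). pose proof (dmax_tri d (F w) (F t) c).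
      rewrite (dmax_sym d z (F w)) in *. rewrite (dmax_sym d (F w) (F t)) in *. lra.
    - assert (HnC : ~ C (F t)).
      { intro HC. apply Hnc. exists (F t). split; auto. rewrite dmax_refl; lra. }
      assert (Hdt : exists dt, 0 < dt /\
        ((forall n a c, chain M rho x (F t) n a c -> (1 <= n)%nat -> ~ elt c dt) \/
         (forall n a c, chain M rho (F t) x n a c -> (1 <= n)%nat -> ~ elt c dt))).
      { apply NNPP; intro Hno. apply HnC. apply HCin; auto.
        - intros s0 Hs0. apply NNPP; intro H1. apply Hno. exists s0. split; auto. left.
          intros n a c Hch Hn1 Hel. apply H1. eapply rho_lt_of_chain; eauto.
        - intros s0 Hs0. apply NNPP; intro H1. apply Hno. exists s0. split; auto. right.
          intros n a c Hch Hn1 Hel. apply H1. eapply rho_lt_of_chain; eauto. }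
      destruct Hdt as [dt [Hdt Hor]].
      pose proof (Hcont t (F t) HM1t HMFt) as Hc1.
      rewrite (proj2 (Hzero t (F t) HMt HMFt) eq_refl) in Hc1.
      destruct (Hc1 (dt/3) ltac:(lra)) as [eta1 [Heta1 Heta1']].
      pose proof (Hcont (F t) (F (F t)) HM1Ft (HMF _ HMFt)) as Hc2.
      rewrite (proj2 (Hzero (F t) (F (F t)) HMFt (HMF _ HMFt)) eq_refl) in Hc2.
      destruct (Hc2 (dt/3) ltac:(lra)) as [eta2 [Heta2 Heta2']].
      destruct (HFc (F t) HMFt (eta2 / kap d / 2) ltac:(pose proof (Hkd eta2 Heta2); lra))
        as [eta4 [Heta4 Heta4']].
      destruct (HFc t HMt (eta4 / kap d / 2) ltac:(pose proof (Hkd eta4 Heta4); lra))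
        as [eta3 [Heta3 Heta3']].
      pose proof (Hkd eta1 Heta1). pose proof (Hkd eta2 Heta2).
      pose proof (Hkd eta3 Heta3). pose proof (Hkd eta4 Heta4).
      set (e := Rmin (Rmin (eta1 / kap d) (eta3 / kap d))
                     (Rmin (Rmin (eta4 / kap d / 2) (eta2 / kap d / 2)) (dt/3))).
      assert (He1 : e <= eta1 / kap d) by (unfold e; eapply Rle_trans; [apply Rmin_l| apply Rmin_l]).
      assert (He3 : e <= eta3 / kap d) by (unfold e; eapply Rle_trans; [apply Rmin_l| apply Rmin_r]).
      assert (He4 : e <= eta4 / kap d / 2) by (unfold e; eapply Rle_trans; [apply Rmin_r|];
         eapply Rle_trans; [apply Rmin_l| apply Rmin_l]).
      assert (He2 : e <= eta2 / kap d / 2) by (unfold e; eapply Rle_trans; [apply Rmin_r|];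
         eapply Rle_trans; [apply Rmin_l| apply Rmin_r]).
      assert (Hedt : e <= dt / 3) by (unfold e; eapply Rle_trans; [apply Rmin_r| apply Rmin_r]).
      assert (Hepos : 0 < e) by (unfold e; repeat apply Rmin_glb_lt; lra).
      exists e. intros _. split; auto.
      intros w z y HSw HMz HMy Hwt Hwz1 _ Hzy _ [n1 [a1 [c1 [Hch1 Hc1e]]]] [n2 [a2 [c2 [Hch2 Hc2e]]]].
      assert (HMw := proj1 HSw). assert (HM1w := HSM1 w HSw).
      assert (Hd1 : Defs.dist d t w < eta1) by (apply dist_lt_of_dmax; auto; rewrite dmax_sym; lra).
      assert (Hd3 : Defs.dist d t w < eta3) by (apply dist_lt_of_dmax; auto; rewrite dmax_sym; lra).
      destruct (Heta1' w (F t) HM1w HMFt Hd1 ltac:(rewrite dist_refl; lra)) as [r1 [Hr1 Hr1']].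
      specialize (Heta3' w HMw Hd3). apply dmax_lt_of_dist in Heta3'.
      assert (Hd4 : Defs.dist d (F t) z < eta4).
      { apply dist_lt_of_dmax; auto. pose proof (dmax_tri d (F t) (F w) z). lra. }
      specialize (Heta4' z HMz Hd4). apply dmax_lt_of_dist in Heta4'.
      assert (Hd2 : Defs.dist d (F (F t)) y < eta2).
      { apply dist_lt_of_dmax; auto. pose proof (dmax_tri d (F (F t)) (F z) y). lra. }
      destruct (Heta2' (F t) y HM1Ft HMy ltac:(rewrite dist_refl; lra) Hd2) as [r2 [Hr2 Hr2']].
      rewrite Rminus_0_r in Hr1', Hr2'. pose proof (Rle_abs r1). pose proof (Rle_abs r2).
      destruct Hor as [Hor|Hor].
      + apply (Hor _ _ _ (chain_app _ _ _ _ _ _ _ _ _ _ _ Hch1 (chain_jmp M rho w (F t) HMw HMFt))).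
        lia. eapply elt_mono; [apply elt_plus; [exact Hc1e|]|].
        rewrite Hr1; simpl. instantiate (1 := dt/3). lra. lra.
      + apply (Hor _ _ _ (chain_app _ _ _ _ _ _ _ _ _ _ _ (chain_jmp M rho (F t) y HMFt HMy) Hch2)).
        lia. eapply elt_mono; [apply elt_plus; [|exact Hc2e]|].
        rewrite Hr2; simpl. instantiate (1 := dt/3). lra. lra. }
  destruct Hgood as [g Hg].
  destruct (GL d Sset (B + 1 + 2*th2) g) as [dg [Hdg Hdg']].
  - intros s0 [Hs0 Hs0e]. split; [apply (proj1 HMcl); auto|].
    intros i Hi. destruct (Hs0e th2 Hth2) as [c [Hc Hdc]].
    pose proof (dmax_coord d s0 c i Hi). pose proof (HCb c i Hc Hi).
    replace (s0 i) with (c i + (s0 i - c i)) by ring.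
    eapply Rle_trans; [apply Rabs_triang|]. lra.
  - intros t Ht Happ. assert (HMt : M t).
    { apply (proj2 HMcl); auto. intros e He; destruct (Happ e He) as [s0 [[Hs0 _] Hd]].
      exists s0; split; auto. }
    split; auto. intros e He. destruct (Happ (e/2) ltac:(lra)) as [s0 [[_ Hs0e] Hd]].
    destruct (Hs0e (e/2) ltac:(lra)) as [c [Hc Hdc]]. exists c; split; auto.
    pose proof (dmax_tri d t s0 c). pose proof (dmax_le_dist d t s0). lra.
  - intros t Ht; apply Hg; auto.
  - set (beta := Rmin (th2/8) (dg/4)).
    assert (Hbe : 0 < beta) by (unfold beta; apply Rmin_glb_lt; lra).
    assert (Hbe1 : beta <= th2/8) by apply Rmin_l.
    assert (Hbe2 : beta <= dg/4) by apply Rmin_r.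
    destruct (Hbeta beta Hbe) as [cb [Hcb Hcb']].
    set (delta := Rmin (cb/2) (dg/3)).
    assert (Hde : 0 < delta) by (unfold delta; apply Rmin_glb_lt; lra).
    assert (Hde1 : delta <= cb/2) by apply Rmin_l.
    assert (Hde2 : delta <= dg/3) by apply Rmin_r.
    exists delta. split; auto.
    intros n xi HxiM H0 Hn Hcost.
    set (P := fun j => exists c, C c /\ dmax d (xi j) c < th2).
    assert (HP0 : P O) by (exists (xi O); split; auto; rewrite dmax_refl; lra).
    destruct (dich P n HP0) as [Hall|[i [Hi [Hpi Hnpi]]]].
    + intros j Hj. destruct (Hall j Hj) as [c [Hc Hdc]]. split; [auto|].
      exists c. split; auto. apply dist_lt_of_dmax; [lra|]. lra.
    + exfalso.
      assert (Hin : (i < n)%nat).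
      { destruct (Nat.eq_dec i n); [|lia]. subst. exfalso. apply Hnpi. exists (xi n). split; auto.
        rewrite dmax_refl; lra. }
      set (w := xi (i - 1)%nat). set (z := xi i). set (y := xi (S i)).
      assert (HSw : Sset w).
      { split; [apply HxiM; lia|]. intros e He. destruct Hpi as [c [Hc Hdc]].
        exists c; split; auto. fold w in Hdc. lra. }
      destruct (Hdg' w HSw) as [t [Ht [Hwt Hdgt]]].
      destruct (Hg t Ht) as [Hgt HGood].
      assert (Hs1 : dmax d (F w) z <= beta).
      { apply (Hcb' _ _ delta); [apply HxiM; lia| apply HxiM; lia| |lra].
        unfold w, z. replace i with (S (i - 1)) at 2 by lia.
        apply (step_le M rho Hnn xi n); auto; lia. }
      assert (Hs2 : dmax d (F z) y <= beta).
      { apply (Hcb' _ _ delta); [apply HxiM; lia| apply HxiM; lia| |lra].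
        apply (step_le M rho Hnn xi n); auto; lia. }
      apply (HGood w z y HSw (HxiM i ltac:(lia)) (HxiM (S i) ltac:(lia)) Hwt); try lra.
      * intros c Hc. apply Rnot_lt_le; intro Hlt. apply Hnpi. exists c; auto.
      * destruct (chain_of_rho_lt _ _ _ _ (dg/3) (proj1 (proj2 H0)) ltac:(lra))
          as [n1 [a [c1 [Ha [_ Hc1]]]]].
        destruct (prefix_suffix M rho Hnn xi n (i-1) delta ltac:(lia) HxiM Hcost) as [Hpre _].
        exists (n1 + (i - 1))%nat, (app n1 a xi), (eplus c1 (Acost rho xi (i-1))). split.
        { apply (chain_app _ _ _ _ _ _ _ _ _ _ _ Ha). apply chain_self. intros; apply HxiM; lia. }
        eapply elt_mono; [apply elt_ele_plus; eauto| lra].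
      * destruct (chain_of_rho_lt _ _ _ _ (dg/3) (proj2 (proj2 Hn)) ltac:(lra))
          as [n1 [a [c1 [Ha [_ Hc1]]]]].
        destruct (prefix_suffix M rho Hnn xi n (S i) delta ltac:(lia) HxiM Hcost) as [_ Hsuf].
        eexists _, _, _. split.
        { apply (chain_app _ _ _ _ _ _ _ _ _ _ _ (chain_shift M rho xi (S i) n ltac:(lia) HxiM) Ha). }
        eapply elt_mono; [apply ele_elt_plus; eauto| lra].
Qed.
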